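(* Let $D=2$, $0<p\le1$, and $\kappa(\theta,\theta')=\varphi(\|\theta-\theta'\|_p^p)$ with $\varphi(x)=\frac1{1+x}$. For $\Delta>0$ let $\mathcal G_\Delta=\{0,\Delta\}\times\{0,\Delta\}\subset\mathbb R^2$. Then there exists $\Delta>0$ such that $\mathcal G_\Delta$ is not axis admissible with respect to $\kappa$.
   Context: $\|\theta\|_p^p=\sum_d|\theta[d]|^p$. A Cartesian grid is $\mathcal G=\prod_{d=1}^D\mathcal S_d$ with $\mathcal S_d\subset\mathbb R$ finite. $\mathcal G=\{\theta_\ell\}_{\ell=1}^{|\mathcal G|}$ is axis admissible w.r.t. $\kappa$ if for every $d\in\{1,\dots,D\}$, every $\theta\in\mathbb R^D$ with $\theta[d]=0$ and every real coefficients $\{c_\ell\}$ such that $f_d(t)=|\sum_\ell c_\ell\kappa(\theta+t\mathbf e_d,\theta_\ell)|$ is not identically zero on $\mathbb R$, one has $\emptyset\ne\arg\max_{t\in\mathbb R}f_d(t)\subseteq\mathcal S_d$ ($\mathbf e_d$ the $d$-th canonical basis vector). *)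

(* Defs.v *)
From Stdlib Require Import Reals Lra List.
Import ListNotations.
Open Scope R_scope.

Definition pt : Type := (R * R)%type.

(* d-th coordinate, d in {1,2} (any d <> 1 is read as coordinate 2). *)
Definition coord (d : nat) (x : pt) : R :=
  if Nat.eqb d 1 then fst x else snd x.

Definition shift (d : nat) (x : pt) (t : R) : pt :=
  if Nat.eqb d 1 then (fst x + t, snd x) else (fst x, snd x + t).

(* |x|^p with the convention |0|^p = 0 (p > 0). *)
Definition powabs (x p : R) : R :=
  if Req_EM_T x 0 then 0 else Rpower (Rabs x) p.

Definition lpp (p : R) (x y : pt) : R :=
  powabs (fst x - fst y) p + powabs (snd x - snd y) p.

Definition phi (x : R) : R := 1 / (1 + x).

Definition kappa_p (p : R) (x y : pt) : R := phi (lpp p x y).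

Definition grid (S1 S2 : list R) : list pt := list_prod S1 S2.

Definition side (d : nat) (S1 S2 : list R) : list R :=
  if Nat.eqb d 1 then S1 else S2.

Definition fdir (kappa : pt -> pt -> R) (G : list pt) (d : nat)
  (theta : pt) (c : pt -> R) (t : R) : R :=
  Rabs (fold_right (fun l acc => c l * kappa (shift d theta t) l + acc) 0 G).

Definition is_argmax (f : R -> R) (t : R) : Prop := forall s, f s <= f t.

Definition axis_admissible (kappa : pt -> pt -> R) (S1 S2 : list R) : Prop :=
  forall d : nat, (d = 1%nat \/ d = 2%nat) ->
  forall (theta : pt), coord d theta = 0 ->
  forall (c : pt -> R),
    (exists t, fdir kappa (grid S1 S2) d theta c t <> 0) ->
    (exists t, is_argmax (fdir kappa (grid S1 S2) d theta c) t) /\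
    (forall t, is_argmax (fdir kappa (grid S1 S2) d theta c) t -> In t (side d S1 S2)).

(* Main.v *)
Require Import Defs.
From Stdlib Require Import Reals List Lra.
Import ListNotations.
Open Scope R_scope.

Definition cc (l : pt) : R :=
  if Req_EM_T (fst l) 0 then (if Req_EM_T (snd l) 0 then 1 else -2) else 0.

Lemma Rpower1 (p : R) : Rpower 1 p = 1.
Proof. unfold Rpower; rewrite ln_1, Rmult_0_r; apply exp_0. Qed.

Lemma powabs_nn (x p : R) : 0 <= powabs x p.
Proof. unfold powabs; destruct (Req_EM_T x 0); [lra| unfold Rpower; pose proof (exp_pos (p * ln (Rabs x))); lra]. Qed.

Lemma f_eq (p t : R) :
  fdir (kappa_p p) (grid [0; 1] [0; 1]) 1 (0, 0) cc t =
  Rabs (1 / (1 + powabs t p) - 2 / (1 + (powabs t p + 1))).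
Proof.
  unfold fdir, grid, kappa_p, lpp, shift, cc; simpl.
  replace (0 + t - 0) with t by ring.
  replace (0 - 0) with 0 by ring.
  replace (0 - 1) with (-1) by ring.
  replace (0 + t - 1) with (t - 1) by ring.
  unfold powabs at 2 4 6 8.
  destruct (Req_EM_T 0 0) as [_|h]; [|lra].
  destruct (Req_EM_T (-1) 0) as [h|_]; [lra|].
  destruct (Req_EM_T 0 0) as [_|h]; [|lra].
  destruct (Req_EM_T 1 0) as [h|_]; [lra|].
  destruct (Req_EM_T 1 0) as [h|_]; [lra|].
  try replace (Rabs (-1)) with 1 by (rewrite Rabs_Ropp, Rabs_R1; reflexivity).
  try rewrite Rabs_R1.
  idtac.
  replace (Rpower (Rabs (-1)) p) with 1.
  2:{ rewrite Rabs_left by lra. replace (- -1) with 1 by ring. now rewrite Rpower1. }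
  assert (hs : 0 <= powabs t p).
  { unfold powabs; destruct (Req_EM_T t 0); [lra| unfold Rpower; pose proof (exp_pos (p * ln (Rabs t))); lra]. }
  set (s := powabs t p) in *.
  pose proof (powabs_nn (t-1) p).
  unfold phi. f_equal. field; repeat split; lra.
Qed.

Theorem mainTheorem17 (p : R) (hp0 : 0 < p) (hp1 : p <= 1) :
  exists Delta : R, 0 < Delta /\
    ~ axis_admissible (kappa_p p) [0; Delta] [0; Delta].
Proof.
  exists 1. split; [lra|]. intro H.
  assert (h1 : powabs 1 p = 1).
  { unfold powabs. destruct (Req_EM_T 1 0); [lra|]. rewrite Rabs_R1. apply Rpower1. }
  assert (h0 : powabs 0 p = 0).
  { unfold powabs. destruct (Req_EM_T 0 0); [reflexivity|lra]. }
  set (ts := Rpower (3/2) (1/p)).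
  assert (tpos : 0 < ts) by (unfold ts, Rpower; apply exp_pos).
  assert (hs : powabs ts p = 3/2).
  { unfold powabs. destruct (Req_EM_T ts 0); [lra|].
    rewrite Rabs_right by lra. unfold ts. rewrite Rpower_mult.
    replace (1 / p * p) with 1 by (field; lra). apply Rpower_1. lra. }
  destruct (H 1%nat (or_introl eq_refl) (0, 0) eq_refl cc) as [[t0 Ht0] Hin].
  { exists 1. rewrite f_eq, h1. rewrite Rabs_left; lra. }
  specialize (Hin t0 Ht0). simpl in Hin.
  destruct Hin as [e|[e|[]]]; subst t0.
  - specialize (Ht0 1). unfold is_argmax in Ht0. rewrite !f_eq, h0, h1 in Ht0.
    rewrite Rabs_left in Ht0 by lra.
    replace (1 / (1 + 0) - 2 / (1 + (0 + 1))) with 0 in Ht0 by field.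
    rewrite Rabs_R0 in Ht0. lra.
  - specialize (Ht0 ts). rewrite !f_eq, h1, hs in Ht0.
    rewrite !Rabs_left in Ht0 by lra. lra.
Qed.
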